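(* Every NSS topological group is TAP.
   Context: Topological groups are Hausdorff. A topological group is NSS if some open neighborhood of the identity contains no nontrivial subgroup. A subset $A$ of a topological group $G$ is absolutely productive in $G$ if for every injection $a:\mathbb{N}\to A$ and every map $z:\mathbb{N}\to\mathbb{Z}$ the sequence $\left(\prod_{n=0}^{k}a(n)^{z(n)}\right)_{k\in\mathbb{N}}$ converges to some element of $G$. $G$ is TAP if every absolutely productive subset of $G$ is finite. *)

(* Defs.v *)
From HB Require Import structures.
From mathcomp Require Import all_boot all_order.
From mathcomp Require Import ssralg ssrint.
From mathcomp Require Import boolp classical_sets functions cardinality topology.

Set Implicit Arguments.
Unset Strict Implicit.
Unset Printing Implicit Defensive.

Local Open Scope classical_set_scope.
Local Open Scope group_scope.

(* A topological group: a (possibly non-abelian) group whose carrier is a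
   topological space, with continuous multiplication and inversion.
   (Hausdorffness is imposed separately, see [hausdorff_space] in the theorem.) *)
HB.mixin Record isTopologicalGroup G of Group G & Topological G := {
  mulg_continuous : continuous (fun xy : G * G => (xy.1 * xy.2)%g) ;
  invg_continuous : continuous (fun x : G => x^-1%g)
}.

#[short(type="topGroupType")]
HB.structure Definition TopologicalGroup :=
  {G of isTopologicalGroup G & Group G & Topological G}.

Definition zexpg (G : groupType) (x : G) (z : int) : G :=
  match z with
  | Posz n => x ^+ n
  | Negz n => (x ^+ n.+1)^-1
  end.

Definition is_subgroup (G : groupType) (H : set G) : Prop :=
  H 1 /\ (forall x y, H x -> H y -> H (x * y)) /\ (forall x, H x -> H (x^-1)).

Definition NSS (G : topGroupType) : Prop :=
  exists U : set G, open U /\ U 1 /\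
    forall H : set G, is_subgroup H -> H `<=` U -> H = [set 1].

Definition absolutely_productive (G : topGroupType) (A : set G) : Prop :=
  forall (a : nat -> G) (z : nat -> int),
    injective a -> (forall n, A (a n)) ->
    exists g : G,
      (fun k : nat => \prod_(0 <= n < k.+1) zexpg (a n) (z n)) @ \oo --> g.

Definition TAP (G : topGroupType) : Prop :=
  forall A : set G, absolutely_productive A -> finite_set A.

(* Main.v *)
Require Import Defs.
From mathcomp Require Import all_boot all_order.
From mathcomp Require Import ssrint boolp classical_sets topology.
From mathcomp Require Import functions cardinality.
Local Open Scope classical_set_scope.
Local Open Scope group_scope.

Section Grp.
Variable G : groupType.

Definition pw (x : G) : set G := [set y | exists m n : nat, y = x ^+ m / x ^+ n].
Lemma pw_zexp (x : G) y : pw x y -> exists z, y = zexpg x z.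
Proof.
move=> [m [n ->]]; case: (leqP n m) => hnm.
  by exists (Posz (m - n)%N); rewrite [zexpg _ _]/= (expgnFr x hnm).
exists (Negz (n - m).-1); rewrite [zexpg _ _]/= prednK ?subn_gt0 //.
by rewrite (expgnFr x (ltnW hnm)) invgF.
Qed.

Lemma pw_sub (x : G) : is_subgroup (pw x).
Proof.
split; first by exists 0%N, 0%N; rewrite mulgV.
split.
  move=> _ _ [m [n ->]] [p [q ->]]; exists (m + p)%N, (q + n)%N.
  have hc : commute (x ^+ n)^-1 (x ^+ p).
    apply/commute_sym/commuteV/commuteX2/commute_refl.
  rewrite -mulgA [(x ^+ n)^-1 * _]mulgA hc !mulgA -expgnDr -mulgA -invgM.
  by rewrite -expgnDr.
move=> _ [m [n ->]]; exists n, m; by rewrite invgF.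
Qed.

Lemma pw_x (x : G) : pw x x.
Proof. by exists 1%N, 0%N; rewrite expg0 invg1 mulg1. Qed.
End Grp.
Arguments pw {G}. Arguments pw_sub {G}. Arguments pw_zexp {G}. Arguments pw_x {G}.
Lemma shiftS_cvg (T : topologicalType) (u : nat -> T) (l : T) :
  u @ \oo --> l -> (fun k => u k.+1) @ \oo --> l.
Proof.
move=> ul P /ul [N _ HN]; exists N => // k /= Hk; apply: HN => /=.
exact: leqW.
Qed.
Lemma inf_inj (T : choiceType) (A : set T) : infinite_set A ->
  exists a : nat -> T, injective a /\ forall n, A (a n).
Proof.
elim/choicePpointed: T => T in A *; first by rewrite emptyE.
move=> /infiniteP/pcard_leP[f]; exists f; split.
  by move=> x y; apply: inj; rewrite ?inE.
by move=> n; apply: funS.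
Qed.
Theorem theorem4p9 (G : topGroupType) :
  hausdorff_space G -> NSS G -> TAP G.
Proof.
move=> _ [U [oU [U1 HU]]] A Aap; apply: contrapT => /inf_inj [a [ainj aA]].
have hz : forall n, a n != 1 -> exists z, ~ U (zexpg (a n) z).
  move=> n an1; apply: contrapT => hn.
  have H : pw (a n) = [set 1].
    apply: HU (pw_sub (a n)) _ => y /pw_zexp [z ->].
    by apply: contrapT => nu; apply: hn; exists z.
  have e : [set 1] (a n) by rewrite -H; exact: pw_x.
  by rewrite /= in e; rewrite e eqxx in an1.
pose z n := if pselect (exists z, ~ U (zexpg (a n) z)) is left h
  then projT1 (cid h) else Posz 0.
have hzU : forall n, a n != 1 -> ~ U (zexpg (a n) (z n)).
  move=> n /hz h; rewrite /z; case: pselect => [h'|//].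
  exact: (projT2 (cid h')).
case: (Aap a z ainj aA) => g pg.
set p := fun k : nat => _ in pg.
have f_eq : forall k, zexpg (a k.+1) (z k.+1) = (p k)^-1 * p k.+1.
  by move=> k; rewrite /p (big_nat_recr k.+1 0) //= mulKg.
have cv : (fun k => (p k)^-1 * p k.+1) @ \oo --> g^-1 * g.
  apply: (@continuous_cvg _ _ _ _ _ (fun k => ((p k)^-1, p k.+1))
     (fun xy : G * G => xy.1 * xy.2) (g^-1, g)).
    exact: mulg_continuous.
  apply: cvg_pair; last exact: shiftS_cvg.
  exact: (@continuous_cvg _ _ _ _ _ p (fun x : G => x^-1) g (@invg_continuous G g) pg).
rewrite mulVg in cv.
have : \forall k \near \oo, U ((p k)^-1 * p k.+1).
  by apply: cv; apply: open_nbhs_nbhs; split.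
case=> N _ HN.
have [h|h] : a N.+1 != 1 \/ a N.+2 != 1.
  case: (eqVneq (a N.+1) 1) => e1; [right; apply/negP => /eqP e2|by left].
  exact: (n_Sn N.+1 (ainj _ _ (etrans e1 (esym e2)))).
  apply: (hzU _ h); rewrite f_eq; apply: HN; rewrite /=; exact: leqnn.
apply: (hzU _ h); rewrite (f_eq N.+1); apply: HN; rewrite /=; exact: leqnSn.
Qed.
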